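(* Let $V$ be an Archimedean linear lattice and let $(\mathcal{R}, S, V)$ be a $V$-complete vector $S$-metric space. Let $p, k:\mathcal{R}\to\mathcal{R}$ be maps satisfying: (i) for all $\xi,\gamma\in\mathcal{R}$, $$S(p\xi,p\xi,p\gamma)\preceq h_1 S(k\xi,k\xi,k\gamma)+h_2 S(p\xi,p\xi,k\xi)+h_3 S(p\gamma,p\gamma,k\gamma)+h_4 S(p\xi,p\xi,k\gamma)+h_5 S(p\gamma,p\gamma,k\xi),$$ where $h_1,\dots,h_5$ are positive real constants with $2h_1+2h_2+2h_3+4h_4+4h_5<1$; (ii) $p(\mathcal{R})\subset k(\mathcal{R})$; (iii) one of $p(\mathcal{R})$ or $k(\mathcal{R})$ is a $V$-complete subspace of $\mathcal{R}$. Then $\{p,k\}$ has a unique point of coincidence in $\mathcal{R}$. If moreover $\{p,k\}$ is weakly compatible, then $p$ and $k$ have a unique common fixed point in $\mathcal{R}$.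
   Context: An ordered linear space is a real vector space $V$ with a partial order $\preceq$ such that $x\preceq y$ implies $x+z\preceq y+z$ and $\omega x\preceq \omega y$ for all $z\in V$, $\omega>0$. A linear lattice (Riesz space) is an ordered linear space in which every two-element set has a supremum and an infimum. Write $V^+=\{x\in V: x\succeq 0\}$; for a sequence $\langle\mu_n\rangle$ in $V$, $\mu_n\downarrow 0$ means $\mu_n$ is decreasing with infimum $0$. $V$ is Archimedean if $\frac1n x\downarrow 0$ for every $x\in V^+$. A vector $S$-metric on a nonempty set $\mathcal{R}$ is a map $S:\mathcal{R}\times\mathcal{R}\times\mathcal{R}\to V$ such that for all $x,y,z,a\in\mathcal{R}$: (a) $S(x,y,z)\succeq 0$; (b) $S(x,y,z)=0$ iff $x=y=z$; (c) $S(x,y,z)\preceq S(x,x,a)+S(y,y,a)+S(z,z,a)$. Then $(\mathcal{R},S,V)$ is a vector $S$-metric space. A sequence $\langle x_n\rangle$ in $\mathcal{R}$ $V$-converges to $x\in\mathcal{R}$ if there is a sequence $\mu_n\downarrow 0$ in $V$ with $S(x_n,x_n,x)\preceq \mu_n$ for all $n$; it is $V$-Cauchy if there is $\mu_n\downarrow0$ in $V$ with $S(x_n,x_n,x_{n+q})\preceq\mu_n$ for all $n,q$. The space (or a subset) is $V$-complete if every $V$-Cauchy sequence in it $V$-converges to a limit in it. For maps $f,g:\mathcal{R}\to\mathcal{R}$, a point $x$ with $fx=gx=y$ is a coincidence point and $y$ is a point of coincidence of $f$ and $g$; $f,g$ are weakly compatible if $fgx=gfx$ whenever $fx=gx$.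 A common fixed point of $f$ and $g$ is a point $x$ with $fx=gx=x$. *)

(* Defs.v *)
From HB Require Import structures.
From mathcomp Require Import all_boot all_order all_algebra.
From mathcomp Require Import reals.
Set Implicit Arguments. Unset Strict Implicit. Unset Printing Implicit Defensive.
Import Order.TTheory GRing.Theory Num.Theory.
Local Open Scope ring_scope.

Section OrderedSpaces.
Variables (R : realType) (V : lmodType R).
Variable le : V -> V -> Prop.

Definition ordered_linear_space : Prop :=
  [/\ (forall x, le x x),
      (forall x y, le x y -> le y x -> x = y),
      (forall x y z, le x y -> le y z -> le x z),
      (forall x y z, le x y -> le (x + z) (y + z)) &
      (forall (w : R) x y, 0 < w -> le x y -> le (w *: x) (w *: y))].

Definition is_sup2 (x y s : V) : Prop :=
  le x s /\ le y s /\ forall u, le x u -> le y u -> le s u.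
Definition is_inf2 (x y i : V) : Prop :=
  le i x /\ le i y /\ forall u, le u x -> le u y -> le u i.

Definition linear_lattice : Prop :=
  ordered_linear_space /\
  forall x y, (exists s, is_sup2 x y s) /\ (exists i, is_inf2 x y i).

Definition decr_to_0 (mu : nat -> V) : Prop :=
  (forall n, le (mu n.+1) (mu n)) /\
  (forall n, le 0 (mu n)) /\
  (forall b, (forall n, le b (mu n)) -> le b 0).

Definition archimedean : Prop :=
  forall x, le 0 x -> decr_to_0 (fun n => (n.+1%:R)^-1 *: x).

Variable X : Type.
Variable S : X -> X -> X -> V.

Definition vector_S_metric : Prop :=
  (forall x y z, le 0 (S x y z)) /\
  (forall x y z, S x y z = 0 <-> (x = y /\ y = z)) /\
  (forall x y z a, le (S x y z) (S x x a + S y y a + S z z a)).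

Definition V_converges (u : nat -> X) (x : X) : Prop :=
  exists mu, decr_to_0 mu /\ forall n, le (S (u n) (u n) x) (mu n).

Definition V_Cauchy (u : nat -> X) : Prop :=
  exists mu, decr_to_0 mu /\ forall n q, le (S (u n) (u n) (u (n + q)%N)) (mu n).

Definition V_complete_set (A : X -> Prop) : Prop :=
  forall u, (forall n, A (u n)) -> V_Cauchy u ->
  exists2 x, A x & V_converges u x.

Definition V_complete : Prop := V_complete_set (fun _ => True).
End OrderedSpaces.

Definition fimage {X : Type} (f : X -> X) : X -> Prop := fun y => exists x, f x = y.

Definition point_of_coincidence {X : Type} (f g : X -> X) (y : X) : Prop :=
  exists x, f x = y /\ g x = y.

Definition weakly_compatible {X : Type} (f g : X -> X) : Prop :=
  forall x, f x = g x -> f (g x) = g (f x).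

(* Main.v *)
Require Import Defs.
From mathcomp Require Import all_boot all_order all_algebra.
From mathcomp Require Import reals ring lra.
From Stdlib Require Import ClassicalEpsilon.
Import Order.TTheory GRing.Theory Num.Theory.
Local Open Scope ring_scope.
Set Implicit Arguments. Unset Strict Implicit.

Section Real.
Variable R : realType.

Lemma bernoulli_ineq (t : R) n : 0 <= t -> 1 + n%:R * t <= (1 + t) ^+ n.
Proof.
move=> t0; elim: n => [|n IH]; first by rewrite expr0 mul0r addr0.
rewrite exprS -natr1.
have h : (1 + t) * (1 + n%:R * t) <= (1 + t) * (1 + t) ^+ n.
  by apply: ler_wpM2l => //; lra.
have hn : 0 <= n%:R :> R by [].
apply: le_trans h; nra.
Qed.

Lemma geom_small (l e : R) : 0 < l -> l < 1 -> 0 < e -> exists n, l ^+ n <= e.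
Proof.
move=> l0 l1 e0.
pose t := l^-1 - 1.
have t0 : 0 < t by rewrite /t subr_gt0 invf_gt1.
have ht : l = (1 + t)^-1 by rewrite /t addrC subrK invrK.
have p0 : 0 <= (t * e)^-1 by rewrite invr_ge0 mulr_ge0 // ltW.
exists (Num.bound (t * e)^-1).
set n := Num.bound _.
have hb := archi_boundP p0; rewrite -/n in hb.
have hB := bernoulli_ineq n (ltW t0).
rewrite ht exprVn.
set P := (1 + t) ^+ n in hB *.
have hpos : 0 < P by rewrite /P exprn_gt0 //; lra.
have h1 : 1 < n%:R * (t * e).
  have := ltr_pM2r (mulr_gt0 t0 e0) ((t*e)^-1) n%:R; rewrite hb.
  by rewrite mulVf // mulf_neq0 // gt_eqF.
have hn : 0 <= n%:R :> R by [].
have h2 : 1 <= e * P by nra.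
apply: (@le_trans _ _ (P^-1 * (e * P))).
  by rewrite -{1}[P^-1]mulr1 ler_wpM2l // invr_ge0 ltW.
by rewrite mulrCA mulVf ?mulr1 // gt_eqF.
Qed.
End Real.

Section OLS.
Variables (R : realType) (V : lmodType R) (le : V -> V -> Prop).
Hypothesis ols : ordered_linear_space le.

Lemma le_refl' x : le x x. Proof. case: ols => h _ _ _ _; exact: h. Qed.
Lemma le_anti x y : le x y -> le y x -> x = y. Proof. move=> h1 h2; case: ols => _ h _ _ _; exact: h. Qed.
Lemma le_tr x y z : le x y -> le y z -> le x z. Proof. move=> h1 h2; case: ols => _ _ h _ _; exact: h h1 h2. Qed.
Lemma le_addr x y z : le x y -> le (x + z) (y + z). Proof. move=> h1; case: ols => _ _ _ h _; exact: h. Qed.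
Lemma le_addl x y z : le x y -> le (z + x) (z + y).
Proof. by move=> h; rewrite ![z + _]addrC; apply: le_addr. Qed.
Lemma leD' a b c d : le a b -> le c d -> le (a + c) (b + d).
Proof. by move=> h1 h2; apply: le_tr (le_addr c h1) (le_addl b h2). Qed.
Lemma le_addr_inv x y z : le (x + z) (y + z) -> le x y.
Proof. by move/(le_addr (- z)); rewrite !addrK. Qed.
Lemma leZ' (r : R) x y : 0 <= r -> le x y -> le (r *: x) (r *: y).
Proof.
rewrite le_eqVlt => /orP[/eqP<- _|r0 h]; first by rewrite !scale0r; apply: le_refl'.
by case: ols => _ _ _ _ hZ; apply: hZ.
Qed.
Lemma le0Z (r : R) x : 0 <= r -> le 0 x -> le 0 (r *: x).
Proof. by move=> r0 h; have := leZ' r0 h; rewrite scaler0. Qed.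
Lemma leZl (r s : R) x : r <= s -> le 0 x -> le (r *: x) (s *: x).
Proof.
move=> rs x0; have h : le 0 ((s - r) *: x) by apply: le0Z => //; rewrite subr_ge0.
have := le_addr (r *: x) h; rewrite add0r -scalerDl subrK //.
Qed.

Definition L (x y z : V) (a b c : R) := a *: x + b *: y + c *: z.

Lemma L_add x y z a b c a' b' c' :
  L x y z a b c + L x y z a' b' c' = L x y z (a + a') (b + b') (c + c').
Proof.
rewrite /L !scalerDl.
rewrite -!addrA; congr (_ + _); rewrite [RHS]addrC -!addrA; congr (_ + _).
rewrite [RHS]addrC -!addrA; congr (_ + _).
by rewrite addrC -!addrA addrC -!addrA; congr (_ + _); rewrite addrC.
Qed.
Lemma L_scale x y z r a b c : r *: L x y z a b c = L x y z (r * a) (r * b) (r * c).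
Proof. by rewrite /L !scalerDr !scalerA. Qed.
Lemma L_x x y z : L x y z 1 0 0 = x. Proof. by rewrite /L scale1r !scale0r !addr0. Qed.
Lemma L_y x y z : L x y z 0 1 0 = y. Proof. by rewrite /L scale1r !scale0r add0r addr0. Qed.
Lemma L_z x y z : L x y z 0 0 1 = z. Proof. by rewrite /L scale1r !scale0r !add0r. Qed.
Lemma L_0 x y z : L x y z 0 0 0 = 0. Proof. by rewrite /L !scale0r !addr0. Qed.
Lemma L_mono x y z a b c a' b' c' : le 0 x -> le 0 y -> le 0 z ->
  a <= a' -> b <= b' -> c <= c' -> le (L x y z a b c) (L x y z a' b' c').
Proof.
move=> x0 y0 z0 ha hb hc; rewrite /L.
apply: leD'; first apply: leD'.
- exact: (leZl ha x0).
- exact: (leZl hb y0).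
- exact: (leZl hc z0).
Qed.

Lemma L_absorb x y z a b c : le 0 y -> le 0 z -> a < 1 -> le x (L x y z a b c) ->
  le x (L x y z 0 (b / (1 - a)) (c / (1 - a))).
Proof.
move=> y0 z0 a1 h.
have h1 : le ((1 - a) *: x) (b *: y + c *: z).
  apply: (@le_addr_inv _ _ (a *: x)); rewrite -scalerDl subrK scale1r.
  by rewrite [_ + a *: x]addrC addrA.
have ha : 0 < 1 - a by rewrite subr_gt0.
have hi : 0 <= (1 - a)^-1 by rewrite invr_ge0 ltW.
have := leZ' hi h1.
rewrite scalerA mulVf ?gt_eqF // scale1r /L scale0r add0r scalerDr !scalerA.
by rewrite ![(1 - a)^-1 * _]mulrC.
Qed.


Definition nullP (s : nat -> V) :=
  forall b N, (forall n, (N <= n)%N -> le b (s n)) -> le b 0.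

Lemma dec_mono s m n : decr_to_0 le s -> (m <= n)%N -> le (s n) (s m).
Proof.
move=> [st _] mn; rewrite -(subnKC mn).
elim: (n - m)%N => [|k IH]; first by rewrite addn0; apply: le_refl'.
by rewrite addnS; apply: le_tr IH.
Qed.

Lemma dec_null s : decr_to_0 le s -> nullP s.
Proof.
move=> ds b N H; case: (ds) => _ [_ inf]; apply: inf => n.
apply: le_tr (H (n + N)%N (leq_addl _ _)) _; exact: (dec_mono ds (leq_addr N n)).
Qed.

Lemma null_scale (c : R) s : 0 < c -> nullP s -> nullP (fun n => c *: s n).
Proof.
move=> c0 ns b N H.
have hi : 0 <= c^-1 by rewrite invr_ge0 ltW.
have : le (c^-1 *: b) 0.
  apply: (ns _ N) => n /H /(leZ' hi); rewrite scalerA mulVf ?gt_eqF // scale1r.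
  done.
move/(leZ' (ltW c0)); rewrite scalerA divff ?gt_eqF // scale1r scaler0.
done.
Qed.

Lemma null_add u w : nullP u -> nullP w ->
  (forall m n, (m <= n)%N -> le (w n) (w m)) -> nullP (fun n => u n + w n).
Proof.
move=> nu nw wm b N H.
apply: (nw b 0%N) => m _.
have : le (b - w m) 0.
  apply: (nu _ (maxn N m)) => n; rewrite geq_max => /andP[Nn mn].
  apply: (@le_addr_inv _ _ (w m)); rewrite subrK.
  apply: le_tr (H n Nn) _; apply: le_addl => //; exact: wm.
move/(le_addr (w m)); rewrite subrK add0r; done.
Qed.

Lemma arch_dec (r : nat -> R) x : archimedean le -> le 0 x ->
  (forall n, r n.+1 <= r n) -> (forall n, 0 <= r n) ->
  (forall e, 0 < e -> exists n, r n <= e) -> decr_to_0 le (fun n => r n *: x).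
Proof.
move=> ar x0 rd r0 rs; split; [|split].
- move=> n; exact: leZl.
- move=> n; exact: le0Z.
- move=> b Hb; case: (ar x x0) => _ [_ inf]; apply: inf => m.
  have [n hn] := rs (m.+1%:R^-1) (ltac:(by rewrite invr_gt0)).
  apply: le_tr (Hb n) _; exact: leZl.
Qed.
Variables (X : Type) (S : X -> X -> X -> V).
Hypothesis Sm : vector_S_metric le S.

Lemma S_ge0 x y z : le 0 (S x y z). Proof. by case: Sm. Qed.
Lemma S_xxx x : S x x x = 0. Proof. by case: Sm => _ [h _]; apply/h. Qed.
Lemma S_eq0 x y : S x x y = 0 -> x = y. Proof. by case: Sm => _ [h _] /h []. Qed.
Lemma S_tri x y z : le (S x x z) (S x x y + S x x y + S z z y).
Proof. by case: Sm => _ [_ h]; apply: h. Qed.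
Lemma S_sym x y : S x x y = S y y x.
Proof.
have h : forall a b, le (S a a b) (S b b a).
  by move=> a b; have := S_tri a a b; rewrite S_xxx !add0r.
exact: le_anti.
Qed.

Lemma comb5 (t1 t2 t3 t4 t5 B1 B2 B3 B4 B5 : V) (c1 c2 c3 c4 c5 : R) :
  0 <= c1 -> 0 <= c2 -> 0 <= c3 -> 0 <= c4 -> 0 <= c5 ->
  le t1 B1 -> le t2 B2 -> le t3 B3 -> le t4 B4 -> le t5 B5 ->
  le (c1 *: t1 + c2 *: t2 + c3 *: t3 + c4 *: t4 + c5 *: t5)
     (c1 *: B1 + c2 *: B2 + c3 *: B3 + c4 *: B4 + c5 *: B5).
Proof.
move=> *; apply: leD'; first apply: leD'; first apply: leD'; first apply: leD';
  by apply: leZ'.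
Qed.

Lemma le_eqr a b c : le a b -> b = c -> le a c. Proof. by move=> h <-. Qed.
Lemma le_eql a b c : le b c -> a = b -> le a c. Proof. by move=> h ->. Qed.
Variables (p k : X -> X) (h1 h2 h3 h4 h5 : R).
Hypothesis arch : archimedean le.
Hypotheses (h1p : 0 < h1) (h2p : 0 < h2) (h3p : 0 < h3) (h4p : 0 < h4) (h5p : 0 < h5).
Hypothesis hsum : 2 * h1 + 2 * h2 + 2 * h3 + 4 * h4 + 4 * h5 < 1.
Hypothesis contr : forall xi ga : X,
     le (S (p xi) (p xi) (p ga))
        (h1 *: S (k xi) (k xi) (k ga) + h2 *: S (p xi) (p xi) (k xi)
         + h3 *: S (p ga) (p ga) (k ga) + h4 *: S (p xi) (p xi) (k ga)
         + h5 *: S (p ga) (p ga) (k xi)).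

Ltac rl := move: (h1p) (h2p) (h3p) (h4p) (h5p) (hsum) => ??????; lra.

Lemma coinc_unique u v : p u = k u -> p v = k v -> p u = p v.
Proof.
move=> eu ev.
set E := S (p u) (p u) (p v).
have h : le E (L E 0 0 (h1 + h4 + h5) 0 0).
  apply: le_eqr (contr u v) _.
  rewrite -eu -ev !S_xxx (S_sym (p v) (p u)) /L !scaler0 !addr0 !scalerDl.
  by rewrite -/E.
have ha : h1 + h4 + h5 < 1.
  rl.
have := L_absorb (le_refl' _) (le_refl' _) ha h.
rewrite /L !scaler0 scale0r !addr0 => hE.
by apply: S_eq0; apply: le_anti => //; apply: S_ge0.
Qed.

Lemma L2 x y z : L x y z 2 1 0 = x + x + y.
Proof. by rewrite /L scale0r addr0 scale1r scaler_nat mulr2n. Qed.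

Lemma coinc_exists : inhabited X -> (forall y, fimage p y -> fimage k y) ->
  (V_complete_set le S (fimage p) \/ V_complete_set le S (fimage k)) ->
  exists u, p u = k u.
Proof.
move=> [x0] incl hc.
have hg : forall x, {x' | k x' = p x}.
  by move=> x; apply: constructive_indefinite_description; apply: incl; exists x.
pose g x := sval (hg x).
have gE : forall x, k (g x) = p x by move=> x; exact: (svalP (hg x)).
pose xs n := iter n g x0.
have kE : forall n, k (xs n.+1) = p (xs n) by move=> n; exact: gE.
pose d n := S (p (xs n)) (p (xs n)) (p (xs n.+1)).
pose lam := (h1 + h2 + h5) / (1 - (h3 + 2 * h5)).
have hA : 0 < 1 - (h3 + 2 * h5) by rl.
have lam0 : 0 < lam by rewrite /lam divr_gt0 //; rl.
have lam1 : lam < 1 by rewrite /lam ltr_pdivrMr // mul1r; rl.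
have step : forall n, le (d n.+1) (lam *: d n).
  move=> n.
  have H := contr (xs n.+1) (xs n.+2).
  rewrite !kE S_xxx in H.
  have hs : le (d n.+1) (L (d n.+1) (d n) 0 (h3 + 2 * h5) (h1 + h2 + h5) 0).
    apply: le_tr H _.
    apply: le_eqr; first apply: (@comb5 _ _ _ _ _
       (L (d n.+1) (d n) 0 0 1 0) (L (d n.+1) (d n) 0 0 1 0) (L (d n.+1) (d n) 0 1 0 0)
       (L (d n.+1) (d n) 0 0 0 0) (L (d n.+1) (d n) 0 2 1 0)); try exact: ltW.
    - by rewrite L_y /d; apply: le_refl'.
    - by rewrite L_y S_sym /d; apply: le_refl'.
    - by rewrite L_x S_sym /d; apply: le_refl'.
    - by rewrite L_0; apply: le_refl'.
    - rewrite L2; apply: le_tr (S_tri _ (p (xs n.+1)) _) _.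
      by rewrite (S_sym (p (xs n.+2))) /d; apply: le_refl'.
    by rewrite !L_scale !L_add; congr (L _ _ _ _ _ _); ring.
  have ha : h3 + 2 * h5 < 1 by rl.
  have := L_absorb (S_ge0 _ _ _) (le_refl' 0) ha hs.
  by rewrite /L scale0r add0r mul0r scale0r addr0.
have dnb : forall n, le (d n) (lam ^+ n *: d 0).
  elim=> [|n IH]; first by rewrite expr0 scale1r; apply: le_refl'.
  apply: le_tr (step n) _; apply: le_eqr (leZ' (ltW lam0) IH) _.
  by rewrite scalerA exprS.
pose c := 2 / (1 - lam).
have lam1' : 0 < 1 - lam by rewrite subr_gt0.
have c0 : 0 < c by rewrite /c divr_gt0.
pose mu n := (c * lam ^+ n) *: d 0.
have cauchy : forall q n, le (S (p (xs n)) (p (xs n)) (p (xs (n + q)%N))) (mu n).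
  elim=> [|q IH] n.
    rewrite addn0 S_xxx; apply: le0Z; last exact: S_ge0.
    by rewrite mulr_ge0 ?exprn_ge0 // ltW.
  apply: le_tr (S_tri _ (p (xs n.+1)) _) _.
  rewrite (S_sym (p (xs (n + q.+1)%N))) addnS -addSn.
  apply: le_eqr (leD' (leD' (dnb n) (dnb n)) (IH n.+1)) _.
  rewrite /mu -!scalerDl; congr (_ *: _).
  rewrite /c exprS; field.
  by rewrite subr_eq0 eq_sym lt_eqF.
have mud : decr_to_0 le mu.
  apply: arch_dec => //; first exact: S_ge0.
  - move=> n; rewrite exprS mulrA [c * lam]mulrC -mulrA.
    apply: ler_piMl; first by rewrite mulr_ge0 ?exprn_ge0 // ltW.
    exact: ltW.
  - by move=> n; rewrite mulr_ge0 ?exprn_ge0 // ltW.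
  - move=> e e0.
    have [n hn] := geom_small lam0 lam1 (divr_gt0 e0 c0).
    exists n; rewrite -ler_pdivlMl // mulrC; done.
have [z [[u uz] [nu [nud hnu]]]] : exists z, (exists u, k u = z) /\
    exists nu, decr_to_0 le nu /\ forall n, le (S (p (xs n)) (p (xs n)) z) (nu n).
  have cy : V_Cauchy le S (fun n => p (xs n)) by exists mu; split => // n q; exact: cauchy.
  case: hc => hc.
  - have [z hz cv] := hc (fun n => p (xs n)) (fun n => ex_intro _ (xs n) erefl) cy.
    by exists z; split => //; apply: incl.
  - have [z hz cv] := hc (fun n => p (xs n)) (fun n => ex_intro _ (xs n.+1) (kE n)) cy.
    by exists z.
have nu0 : forall n, le 0 (nu n) by case: nud => _ [].
have mu0 : forall n, le 0 (mu n) by case: mud => _ [].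
set D := S (p u) (p u) z.
have bound : forall n,
    le D (L D (nu n) (mu n) (2 * (h2 + 2 * h4)) (2 * (h1 + h4 + h5) + 1) (2 * h3)).
  move=> n.
  have nuS : le (S (p (xs n.+1)) (p (xs n.+1)) z) (nu n).
    exact: le_tr (hnu n.+1) (dec_mono nud (leqnSn n)).
  have T : le (S (p u) (p u) (p (xs n.+1)))
              (L D (nu n) (mu n) (h2 + 2 * h4) (h1 + h4 + h5) h3).
    have H := contr u (xs n.+1).
    rewrite uz kE in H.
    apply: le_tr H _.
    apply: le_eqr; first apply: (@comb5 _ _ _ _ _
       (L D (nu n) (mu n) 0 1 0) (L D (nu n) (mu n) 1 0 0) (L D (nu n) (mu n) 0 0 1)
       (L D (nu n) (mu n) 2 1 0) (L D (nu n) (mu n) 0 1 0)); try exact: ltW.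
    - by rewrite L_y S_sym; apply: hnu.
    - by rewrite L_x; apply: le_refl'.
    - by rewrite L_z S_sym; have := cauchy 1%N n; rewrite addn1.
    - rewrite L2; apply: le_tr (S_tri _ z _) _.
      by apply: leD' (le_refl' _) (hnu n).
    - by rewrite L_y.
    by rewrite !L_scale !L_add; congr (L _ _ _ _ _ _); ring.
  apply: le_tr (S_tri _ (p (xs n.+1)) z) _.
  have T3 : le (S z z (p (xs n.+1))) (L D (nu n) (mu n) 0 1 0) by rewrite L_y S_sym.
  apply: le_eqr (leD' (leD' T T) T3) _.
  by rewrite !L_add; congr (L _ _ _ _ _ _); ring.
have ha : 2 * (h2 + 2 * h4) < 1 by rl.
have hb : 0 < (2 * (h1 + h4 + h5) + 1) / (1 - 2 * (h2 + 2 * h4)).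
  by apply: divr_gt0; rl.
have hc3 : 0 < (2 * h3) / (1 - 2 * (h2 + 2 * h4)).
  by apply: divr_gt0; rl.
have nl := null_add (null_scale hb (dec_null nud)) (null_scale hc3 (dec_null mud))
  (fun m n mn => leZ' (ltW hc3) (dec_mono mud mn)).
have D0 : le D 0.
  apply: (nl D 0%N) => n _.
  have := L_absorb (nu0 n) (mu0 n) ha (bound n).
  by rewrite /L scale0r add0r.
exists u; rewrite uz; apply: S_eq0; apply: le_anti => //; exact: S_ge0.
Qed.
End OLS.

Theorem corollary3p2 (R : realType) (V : lmodType R) (le : V -> V -> Prop)
  (X : Type) (S : X -> X -> X -> V) (p k : X -> X) (h1 h2 h3 h4 h5 : R) :
  linear_lattice le -> archimedean le ->
  inhabited X -> vector_S_metric le S -> V_complete le S ->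
  0 < h1 -> 0 < h2 -> 0 < h3 -> 0 < h4 -> 0 < h5 ->
  2 * h1 + 2 * h2 + 2 * h3 + 4 * h4 + 4 * h5 < 1 ->
  (forall xi ga : X,
     le (S (p xi) (p xi) (p ga))
        (h1 *: S (k xi) (k xi) (k ga) + h2 *: S (p xi) (p xi) (k xi)
         + h3 *: S (p ga) (p ga) (k ga) + h4 *: S (p xi) (p xi) (k ga)
         + h5 *: S (p ga) (p ga) (k xi))) ->
  (forall y, fimage p y -> fimage k y) ->
  (V_complete_set le S (fimage p) \/ V_complete_set le S (fimage k)) ->
  (exists y, point_of_coincidence p k y /\
     forall y', point_of_coincidence p k y' -> y' = y) /\
  (weakly_compatible p k ->
     exists x, (p x = x /\ k x = x) /\ forall x', p x' = x' /\ k x' = x' -> x' = x).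
Proof.
move=> [ols _] arch inh Sm _ h1p h2p h3p h4p h5p hsum contr incl hc.
have [u hu] := @coinc_exists R V le ols X S Sm p k h1 h2 h3 h4 h5 arch
  h1p h2p h3p h4p h5p hsum contr inh incl hc.
have uniq : forall v, p v = k v -> p v = p u.
  by move=> v hv; apply: (@coinc_unique R V le ols X S Sm p k h1 h2 h3 h4 h5
    h1p h2p h3p h4p h5p hsum contr).
have uniqP : forall y', point_of_coincidence p k y' -> y' = p u.
  by move=> y' [v [hv1 hv2]]; rewrite -hv1; apply: uniq; rewrite hv1 hv2.
split.
  exists (p u); split => //; by exists u.
move=> wc.
have ew : p (p u) = k (p u) by rewrite {1}hu; apply: wc.
have fx : p (p u) = p u by apply: uniq.
exists (p u); split; first by split => //; rewrite -ew.
move=> x' [h1' h2']; apply: uniqP; exists x'; split => //.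
Qed.
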